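(* Let $n\in\mathbb{N}$ and let $n=2^{\alpha_1}-2^{\alpha_2}+\cdots+(-1)^{\ell-1}2^{\alpha_\ell}$ be an alternating binary representation of $n$. Then $c(n)=\ell$ if $n$ is odd (i.e. $\alpha_\ell=0$), and $c(n)=\ell+1$ if $n$ is even (i.e. $\alpha_\ell\ge1$). Consequently $h(n)=\ell-1$ if $n$ is odd and $h(n)=\ell$ if $n$ is even.
   Context: An alternating binary representation (ABR) of $n\in\mathbb{N}$ is an expression $n=\sum_{i=1}^{\ell}(-1)^{i-1}2^{\alpha_i}$ with $\ell\ge1$ and nonnegative integers $\alpha_1>\alpha_2>\cdots>\alpha_{\ell-1}>\alpha_\ell+1$ (every $n$ has one, obtained from its binary expansion by rewriting maximal blocks of 1s as differences of powers of two, except a final isolated 1). For $i\in\mathbb{N}$, $m\in\mathbb{N}_0$ let $d_i(m)=2^{i-1}-|(m\bmod 2^i)-2^{i-1}|$, and let $c(n)$ be the number of distinct values in $\{d_i(n):i\in\mathbb{N}\}$. For $k\ge0$, $0\le m<2^k$ let $\beta_k(m)\in\{0,1\}^k$ have $j$-th coordinate equal to the binary digit of $m$ of weight $2^{k-j}$. For $n\ge2$, $k=\lceil\log_2 n\rceil$, a pair $(n_0,n_1)$ with $n=n_0+n_1$, $n_0\ge n_1\ge1$ is a hypercubic bipartition (HCBP) of $n$ if for some $i\in\{1,\dots,k\}$ the hyperplane $x_i=1/2$ splits $\beta_k(0),\dots,\beta_k(n-1)$ into $n_0$ points on one side and $n_1$ on the other. For $n\ge 2$, $h(n)$ is the number of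 HCBPs of $n$, and $h(1)=0$. *)

(* Defs.v *)
From HB Require Import structures.
From mathcomp Require Import all_boot all_order all_algebra.
From mathcomp Require Import boolp classical_sets cardinality finmap.
Set Implicit Arguments. Unset Strict Implicit. Unset Printing Implicit Defensive.
Import Order.TTheory GRing.Theory Num.Theory.
Local Open Scope ring_scope.

(* Alternating binary representation: a = [:: alpha_1; ...; alpha_l] with
   l >= 1, alpha_1 > ... > alpha_{l-1} > alpha_l + 1, and
   n = sum_{i=1}^l (-1)^(i-1) 2^(alpha_i). (Indices are 0-based below.) *)
Definition is_ABR (n : nat) (a : seq nat) : Prop :=
  [/\ (0 < size a)%N,
      sorted (fun x y : nat => (y < x)%N) a,
      (1 < size a)%N -> (nth 0 a (size a).-1 + 1 < nth 0 a (size a).-2)%N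
    & (n%:Z = \sum_(i < size a) (-1) ^+ i * (2 ^ (nth 0 a i))%N%:Z)].

Definition dval (i m : nat) : int :=
  (2 ^ i.-1)%N%:Z - `| (m %% 2 ^ i)%N%:Z - (2 ^ i.-1)%N%:Z |%:Z.

Definition cnum (n : nat) : nat :=
  #|` fset_set [set dval i n | i in [set i : nat | (0 < i)%N]] |%fset.

(* beta_k(m)_j is the binary digit of m of weight 2^(k-j); number of
   m in {0,...,n-1} with that digit equal to 1 (the side x_j > 1/2). *)
Definition ones_at (k j n : nat) : nat :=
  #|[set m : 'I_n | odd (m %/ 2 ^ (k - j))]|.

Definition is_HCBP (n n0 n1 : nat) : bool :=
  let k := up_log 2 n in
  [&& n0 + n1 == n, n1 <= n0, 0 < n1 &
   [exists j : 'I_k.+1, (0 < (j : nat)) &&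
      (((ones_at k j n == n1) && (n - ones_at k j n == n0)) ||
       ((ones_at k j n == n0) && (n - ones_at k j n == n1)))]]%N.

(* h(n): number of HCBPs of n for n >= 2, h(1) = 0 (h(0) is not used). *)
Definition hnum (n : nat) : nat :=
  if (n < 2)%N then 0%N
  else #|[set p : 'I_n.+1 * 'I_n.+1 | is_HCBP n p.1 p.2]|.

(* Main.v *)
Require Import Defs.
From HB Require Import structures.
From mathcomp Require Import all_boot all_order all_algebra.
From mathcomp Require Import boolp classical_sets cardinality finmap.
From mathcomp Require Import zify.
Set Implicit Arguments. Unset Strict Implicit. Unset Printing Implicit Defensive.
Import Order.TTheory GRing.Theory Num.Theory.

Definition d (i m : nat) : nat := minn (m %% 2 ^ i) (2 ^ i - m %% 2 ^ i).

Lemma dvalE i m : 0 < i -> dval i m = Posz (d i m).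
Proof.
case: i => [//|i] _; rewrite /dval /d /=.
have : m %% 2 ^ i.+1 < 2 ^ i.+1 by rewrite ltn_pmod // expn_gt0.
idtac.
move: (m %% _) => r; rewrite expnS; move: (2 ^ i) => h Hr.
lia.
Qed.

Lemma d_le i m : d i m <= m.
Proof. rewrite /d; apply: leq_trans (geq_minl _ _) (leq_mod _ _). Qed.

Lemma d_small i m : 0 < i -> 2 * m <= 2 ^ i -> d i m = m.
Proof.
move=> _ H; have P : 0 < 2 ^ i by rewrite expn_gt0.
rewrite /d modn_small; lia.
Qed.

Lemma d_pow_le i a : i <= a -> d i (2 ^ a) = 0.
Proof.
move=> H; rewrite /d -(subnK H) expnD modnMl; lia.
Qed.

Lemma d_sym i a m : i <= a -> m <= 2 ^ a -> d i (2 ^ a - m) = d i m.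
Proof.
move=> H Hm; have P : 0 < 2 ^ i by rewrite expn_gt0.
have E : 2 ^ a = 2 ^ (a - i) * 2 ^ i by rewrite -expnD subnK.
move: Hm; rewrite E (divn_eq m (2 ^ i)).
have Hr : m %% 2 ^ i < 2 ^ i by rewrite ltn_pmod.
move: (2 ^ (a - i)) (m %/ 2 ^ i) (m %% 2 ^ i) Hr P => t q r Hr P Hm.
rewrite /d modnMDl (modn_small Hr).
have [->|r0] := eqVneq r 0.
  rewrite addn0 -mulnBl modnMl; lia.
have tq : q < t.
  rewrite ltnNge; apply/negP => tq; have := leq_mul tq (leqnn (2 ^ i)); lia.
have -> : t * 2 ^ i - (q * 2 ^ i + r) = (t - q).-1 * 2 ^ i + (2 ^ i - r).
  have Et : t = (t - q).-1 + q + 1 by lia.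
  move: ((t - q).-1) Et => u Et. rewrite {1}Et !mulnDl mul1n.
  move: (u * 2 ^ i) (q * 2 ^ i) => x y; lia.
rewrite modnMDl modn_small; lia.
Qed.

Local Open Scope ring_scope.
Definition sumA (a : seq nat) : int :=
  \sum_(i < size a) (-1) ^+ i * (2 ^ (nth 0 a i))%N%:Z.

Lemma sumA_nil : sumA [::] = 0.
Proof. by rewrite /sumA big_ord0. Qed.

Lemma sumA_cons x a : sumA (x :: a) = (2 ^ x)%N%:Z - sumA a.
Proof.
rewrite /sumA /= big_ord_recl /= expr0 mul1r; congr (_ + _).
rewrite -sumrN; apply: eq_bigr => i _.
by rewrite /bump /= add1n exprS mulN1r mulNr.
Qed.
Local Close Scope ring_scope.

Lemma two_le_pow i : 0 < i -> 2 <= 2 ^ i.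
Proof. by move=> Hi; rewrite -{1}(expn1 2) leq_pexp2l. Qed.

Lemma key a :
  (0 < size a)%N -> sorted (fun x y : nat => (y < x)%N) a ->
  ((1 < size a)%N -> (nth 0 a (size a).-1 + 1 < nth 0 a (size a).-2)%N) ->
  exists n s, [/\ Posz n = sumA a, uniq s,
    (forall x, x \in s <-> exists2 i, 0 < i & x = d i n),
    size s = (if odd n then size a else (size a).+1) &
    [/\ 0 < n, n <= 2 ^ (head 0 a) & (1 < size a -> n < 2 ^ (head 0 a))]].
Proof.
elim: a => [//|al a IH] _ Hs Hl.
case: a IH Hs Hl => [|be a] IH Hs Hl.
  exists (2 ^ al).
  have [->|al0] := eqVneq al 0.
    exists [:: 1]; split => //=.
    - by rewrite sumA_cons sumA_nil subr0.
    - move=> x; rewrite inE; split.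
        by move/eqP ->; exists 1 => //; rewrite d_small.
      by case=> i Hi ->; rewrite d_small // muln1 two_le_pow.
  exists [:: 0; 2 ^ al]; split => //=.
  - by rewrite sumA_cons sumA_nil subr0.
  - by rewrite inE eq_sym -lt0n expn_gt0.
  - move=> x; rewrite !inE; split.
      case/orP => /eqP ->.
        by exists 1 => //; rewrite d_pow_le // lt0n.
      by exists al.+1 => //; rewrite d_small // expnS.
    case=> i Hi ->; case: (leqP i al) => Hia.
      by rewrite d_pow_le.
    rewrite d_small //; first by rewrite eqxx orbT.
    by rewrite -expnS leq_pexp2l.
  - by rewrite oddX (negPf al0).
  - by split => //; rewrite expn_gt0.
move: Hs => /= /andP [Hba Hs].
have [n' [s' [En' Us' Ms' Ss' [n'0 n'le n'lt]]]] : exists n s, [/\ Posz n = sumA (be :: a), uniq s,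
    (forall x, x \in s <-> exists2 i, 0 < i & x = d i n),
    size s = (if odd n then size (be :: a) else (size (be :: a)).+1) &
    [/\ 0 < n, n <= 2 ^ (head 0 (be :: a)) & (1 < size (be :: a) -> n < 2 ^ (head 0 (be :: a)))]].
  apply: IH => //.
  by case: a Hl Hs => [//|ga a] Hl Hs _; apply: Hl.
simpl in n'le, n'lt.
have al0 : 0 < al by apply: leq_ltn_trans Hba.
have H2n : 2 * n' < 2 ^ al.
  clear IH; case: a Hl Hs Ss' n'lt En' => [|ga a] Hl Hs Ss' n'lt En'.
    have := Hl isT; rewrite /= => Hg.
    apply: (leq_ltn_trans (n := 2 ^ be.+1)); first by rewrite expnS leq_mul2l.
    by rewrite ltn_exp2l // -addn1.
  have := n'lt isT => Hlt.
  apply: (leq_trans (n := 2 ^ be.+1)); first by rewrite expnS ltn_mul2l.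
  by rewrite leq_exp2l.
have n'al : n' <= 2 ^ al by lia.
set n := 2 ^ al - n'.
have nn' : n' < n by rewrite /n; lia.
exists n, (n :: s'); split.
- by rewrite sumA_cons -En' /n subzn.
- rewrite /= Us' andbT; apply/negP => /Ms' [i _ E].
  by move: (d_le i n'); rewrite -E leqNgt nn'.
- move=> x; rewrite inE; split.
    case/orP.
      move/eqP ->; exists al.+1 => //; rewrite d_small // expnS leq_mul2l.
      by rewrite /n leq_subr orbT.
    case/Ms' => i Hi ->; case: (leqP i al) => Hia.
      by exists i => //; rewrite /n d_sym.
    exists al => //; rewrite /n d_sym // !d_small //.
    - lia.
    - apply: leq_trans (ltnW H2n) _; rewrite leq_exp2l //; exact: ltnW.
  case=> i Hi ->; case: (leqP i al) => Hia.
    rewrite /n d_sym //; apply/orP; right; apply/Ms'; by exists i.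
  rewrite d_small ?eqxx //.
  apply: leq_trans (leq_pexp2l (isT : 0 < 2) Hia); by rewrite expnS leq_mul2l /n leq_subr orbT.
- have -> : odd n = odd n' by rewrite /n oddB // oddX eqn0Ngt al0.
  by rewrite /= Ss'; case: (odd n').
split.
- by rewrite /n subn_gt0; lia.
- by rewrite /n leq_subr.
- by move=> _; rewrite /n; lia.
Qed.

Lemma card_cnt b n :
  #|[set m : 'I_n | odd (m %/ 2 ^ b)]| = \sum_(m < n) odd (m %/ 2 ^ b).
Proof.
rewrite cardsE -sum1_card big_mkcond /=; apply: eq_bigr => i _.
by rewrite unfold_in; case: odd.
Qed.

Lemma d_step b n : d b.+1 n.+1 + 2 * odd (n %/ 2 ^ b) = d b.+1 n + 1.
Proof.
have P : 0 < 2 ^ b by rewrite expn_gt0.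
rewrite /d (divn_eq n (2 ^ b.+1)).
have Hr : n %% 2 ^ b.+1 < 2 ^ b.+1 by rewrite ltn_pmod // expn_gt0.
move: (n %/ _) (n %% _) Hr => q r Hr.
have E1 : (q * 2 ^ b.+1 + r) %/ 2 ^ b = q * 2 + r %/ 2 ^ b.
  by rewrite expnS mulnA divnMDl.
rewrite -addnS !modnMDl (modn_small Hr) E1 oddD oddM andbF /=.
rewrite expnS in Hr *.
have [hr|hr] := ltnP r (2 ^ b).
  rewrite divn_small // modn_small; lia.
rewrite (_ : r %/ 2 ^ b = 1); last first.
  rewrite (_ : r = 1 * 2 ^ b + (r - 2 ^ b)); last lia.
  rewrite divnMDl // divn_small; lia.
have [e|ne] := eqVneq r.+1 (2 * 2 ^ b).
  rewrite e modnn; lia.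
rewrite modn_small; lia.
Qed.

Lemma ones_d b n : 2 * #|[set m : 'I_n | odd (m %/ 2 ^ b)]| + d b.+1 n = n.
Proof.
rewrite card_cnt; elim: n => [|n IH].
  by rewrite big_ord0 /d mod0n subn0 min0n.
rewrite big_ord_recr /=; have := d_step b n; move: IH.
move: (\sum_(_ < n) _) (nat_of_bool (odd (n %/ 2 ^ b))) => S o; lia.
Qed.

Local Open Scope classical_set_scope.
Lemma cnum_eq n s : uniq s -> (forall x, x \in s <-> exists2 i, 0 < i & x = d i n) ->
  cnum n = size s.
Proof.
move=> Us Ms; rewrite /cnum.
have -> : [set dval i n | i in [set i : nat | (0 < i)%N]] =
          [set` [fset x in map Posz s]%fset].
  apply/seteqP; split => x /=.
    case=> i Hi <-; rewrite inE /= (dvalE _ Hi); apply/mapP; exists (d i n) => //.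
    by apply/Ms; exists i.
  rewrite inE /= => /mapP [y /Ms [i Hi ->] ->].
  by exists i => //; rewrite dvalE.
rewrite set_fsetK card_fseq undup_id ?size_map //.
by rewrite map_inj_uniq // => x y [].
Qed.

Local Close Scope classical_set_scope.
Lemma hnum_eq n s : 0 < n -> uniq s ->
  (forall x, x \in s <-> exists2 i, 0 < i & x = d i n) ->
  hnum n = count (fun x => x < n) s.
Proof.
move=> n0 Us Ms; rewrite /hnum.
have [n1|n2] := ltnP n 2.
  have E1 : n = 1 by lia. subst n.
  rewrite (@eq_in_count _ _ pred0) ?count_pred0 // => x /Ms [i Hi ->].
  by rewrite d_small // muln1 two_le_pow.
set k := up_log 2 n.
have Hk1 : n <= 2 ^ k by apply: up_logP.
have Hk0 : 0 < k by rewrite up_log_gt0 n2.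
have Par : forall b, odd (d b.+1 n) = odd n.
  move=> b; have E := ones_d b n; rewrite -{2}E oddD oddM /=. done.
pose g x : 'I_n.+1 * 'I_n.+1 := (inord ((n + x) %/ 2), inord ((n - x) %/ 2)).
have -> : [set p : 'I_n.+1 * 'I_n.+1 | is_HCBP n p.1 p.2] =
          [set p in map g (filter (fun x => x < n) s)].
  apply/setP => p; rewrite !inE; apply/idP/idP.
    move: p => [p1 p2]; rewrite /is_HCBP /=.
    case/and4P => /eqP E12 L21 P2 /existsP [j /andP [j0 Hj]].
    have Ho := ones_d (k - j) n; rewrite -/(ones_at k j n) in Ho.
    move: (ones_at k j n) Ho Hj => o Ho Hj.
    have Eo : (p2 : nat) = o /\ (p1 : nat) = n - o.
      case/orP: Hj => /andP [/eqP h1 /eqP h2]; lia.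
    apply/mapP; exists (d (k - j).+1 n).
      rewrite mem_filter; apply/andP; split; first lia.
      by apply/Ms; exists (k - j).+1.
    rewrite /g; congr (_, _); apply/val_inj; rewrite /= inordK; lia.
  case/mapP => x; rewrite mem_filter => /andP [xn /Ms [i Hi Ex]] ->; subst x.
  have ik : i <= k.
    rewrite leqNgt; apply/negP => ki; move: xn; rewrite d_small //; first by rewrite ltnn.
    apply: leq_trans (leq_pexp2l (isT : 0 < 2) ki); rewrite expnS leq_mul2l Hk1 orbT //.
  have Ho := ones_d i.-1 n; rewrite prednK // in Ho.
  have Po := Par i.-1; rewrite prednK // in Po.
  rewrite /is_HCBP /= !inordK; try lia.
  have jk : k - i.-1 < k.+1 by lia.
  apply/and4P; split; try (apply/eqP; lia); try lia.
  apply/existsP; exists (Ordinal jk) => /=; apply/andP; split; first lia.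
  rewrite /ones_at (_ : k - (k - i.-1) = i.-1); last lia.
  apply/orP; left; apply/andP; split; apply/eqP; lia.
have U : uniq (map g (filter (fun x => x < n) s)).
  rewrite map_inj_in_uniq ?filter_uniq // => x y.
  rewrite !mem_filter => /andP [xn /Ms [i Hi Ex]] /andP [yn /Ms [j Hj Ey]] [_ /(congr1 val)].
  rewrite /= !inordK; try lia.
  have := Par i.-1; have := Par j.-1; rewrite !prednK // -Ex -Ey => pu pv.
  have : x %% 2 = n %% 2 by rewrite !modn2 pv.
  have : y %% 2 = n %% 2 by rewrite !modn2 pu.
  lia.
rewrite cardsE (card_uniqP U) size_map size_filter //.
Qed.


Lemma count_lt n s : uniq s -> n \in s -> (forall x, x \in s -> x <= n) ->
  count (fun x => x < n) s = (size s).-1.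
Proof.
move=> Us ns Hs; rewrite -(count_predC (fun x => x < n) s).
rewrite (@eq_in_count _ (predC _) (pred1 n)); last first.
  move=> x /Hs xn /=; rewrite -leqNgt eqn_leq xn //.
rewrite count_uniq_mem // ns addn1 //.
Qed.

Unset Implicit Arguments.
Theorem theorem20 (n : nat) (a : seq nat) :
  is_ABR n a ->
  (cnum n = if odd n then size a else (size a).+1) /\
  (hnum n = if odd n then (size a).-1 else size a).
Proof.
case=> H0 Hs Hl Hsum.
have [m [s [Em Us Ms Ss [m0 _ _]]]] := key H0 Hs Hl.
have Emn : m = n by apply/eqP; rewrite -eqz_nat Em /sumA -Hsum.
subst m.
have C := cnum_eq Us Ms.
have ns : n \in s.
  apply/Ms; exists n.+1 => //; rewrite d_small // expnS leq_mul2l.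
  by apply/orP; right; apply: ltnW; apply: ltn_expl.
have Hle : forall x, x \in s -> x <= n by move=> x /Ms [i _ ->]; apply: d_le.
rewrite C (hnum_eq m0 Us Ms) (count_lt Us ns Hle) Ss.
by case: (odd n).
Qed.
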